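(* Let $C$ be a real $n\times n$ matrix with nonnegative entries. Then there exist real $n\times n$ matrices $A$ and $B$ with $A$ having nonnegative entries such that $C=AB-BA$ if and only if $\operatorname{tr}(C)=0$.
   Context: Real $n\times n$ matrices are ordered entrywise; a matrix is positive ($\geq 0$) if all its entries are nonnegative. $\operatorname{tr}$ denotes the trace. *)

(* Defs.v *)
From HB Require Import structures.
From mathcomp Require Import all_boot all_order all_algebra.
From mathcomp Require Import Rstruct.
Set Implicit Arguments. Unset Strict Implicit. Unset Printing Implicit Defensive.
Import Order.TTheory GRing.Theory Num.Theory.
Local Open Scope ring_scope.

Definition mx_nonneg (n : nat) (A : 'M[Rdefinitions.R]_n) : Prop :=
  forall i j : 'I_n, 0 <= A i j.

(* Main.v *)
Require Import Defs.
From mathcomp Require Import all_boot all_order all_algebra.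
From mathcomp Require Import Rstruct.
From mathcomp Require Import ring lra.
Import GRing.Theory Num.Theory.
Local Open Scope ring_scope.

Theorem proposition4p3 (n : nat) (C : 'M[Rdefinitions.R]_n) :
  mx_nonneg C ->
  ((exists A B : 'M[Rdefinitions.R]_n, mx_nonneg A /\ C = A *m B - B *m A)
   <-> \tr C = 0).
Proof.
move=> HC; split.
  by move=> [A [B [_ ->]]]; rewrite linearB /= mxtrace_mulC subrr.
move=> Htr.
have Hd : forall i, C i i = 0.
  move=> i; apply: (psumr_eq0P (P := xpredT) (F := fun i => C i i)) => //.
  all: try by move=> k _; exact: HC.
exists (diag_mx (\row_i (i%:R : Rdefinitions.R))).
exists (\matrix_(i, j) (C i j / (i%:R - j%:R))).
split.
  move=> i j; rewrite /diag_mx !mxE; apply: mulrn_wge0; exact: ler0n.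
apply/matrixP => i j.
rewrite mul_diag_mx mul_mx_diag !mxE.
have [<-|Hij] := eqVneq i j.
  by rewrite Hd !mul0r mulr0 subrr.
have Hne : (i%:R - j%:R : Rdefinitions.R) != 0.
  rewrite subr_eq0 eqr_nat; apply: contra Hij => /eqP H.
  by apply/eqP; apply: val_inj.
by rewrite [X in _ - X]mulrC -mulrBl mulrC divfK.
Qed.
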